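(* For every integer $n\geq 1$, \[ \sum_{k,\ell,d\geq 0}\binom{n-1-d}{\ell}\binom{n-1-k}{d}\binom{n-1-\ell}{k} = \tfrac{1}{2}F_{3n}. \]
   Context: $F_n$ is the Fibonacci sequence: $F_0=0$, $F_1=1$, $F_n=F_{n-1}+F_{n-2}$ for $n\ge2$. Binomial coefficients $\binom{a}{b}$ with $b\ge0$ are taken to be $0$ when $a<b$ (in particular when $a<0$), so the sum is finite. *)

(* Defs.v *)
From mathcomp Require Import all_boot all_order all_algebra.
Set Implicit Arguments. Unset Strict Implicit. Unset Printing Implicit Defensive.

Fixpoint fib (n : nat) : nat :=
  match n with
  | 0 => 0
  | 1 => 1
  | (m.+1 as p).+1 => fib p + fib m
  end.

Definition binz (a : int) (b : nat) : nat :=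
  match a with
  | Posz m => 'C(m, b)
  | Negz _ => 0
  end.

(* Main.v *)
Require Import Defs.
From mathcomp Require Import all_boot all_order all_algebra.
From mathcomp Require Import zify.
Import GRing.Theory.
Local Open Scope ring_scope.
Local Open Scope ring_scope.

Lemma coef_lin (c b n j : nat) :
  ((c%:P + b%:P * 'X) ^+ n)`_j = (c ^ (n - j) * b ^ j * 'C(n, j))%N.
Proof.
rewrite exprDn coef_sum.
under eq_bigr => i _.
  rewrite coefMn exprMn -!rmorphXn mulrA -rmorphM coefCM coefXn.
  over.
simpl.
have [jn|nj] := leqP j n.
  have jn1 : (j < n.+1)%N by [].
  rewrite (bigD1 (Ordinal jn1)) //= big1 ?addr0.
    by rewrite eqxx mulr1 -mulr_natr natn.
  move=> i /negP ij.
  suff -> : (j == i :> nat) = false by rewrite mulr0 mul0rn.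
  by apply/negP => /eqP E; apply: ij; apply/eqP/val_inj.
rewrite bin_small // muln0 big1 // => i _.
have -> : (j == i :> nat) = false by apply/negP => /eqP E; have := ltn_ord i; lia.
by rewrite mulr0 mul0rn.
Qed.

Lemma sum_truncP (n N : nat) (F : nat -> {poly nat}) : (n <= N)%N ->
  (forall i, (n <= i)%N -> F i = 0) -> \sum_(i < N) F i = \sum_(i < n) F i.
Proof.
elim: N => [|N IH] hN Hz; first by move: hN; rewrite leqn0 => /eqP ->.
case: (ltngtP n N.+1) hN => // [lt _|-> //].
by rewrite big_ord_recr /= IH // Hz // addr0.
Qed.

Lemma sum_truncN (n N : nat) (F : nat -> nat) : (n <= N)%N ->
  (forall i, (n <= i)%N -> F i = 0%N) -> (\sum_(i < N) F i = \sum_(i < n) F i)%N.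
Proof.
elim: N => [|N IH] hN Hz; first by move: hN; rewrite leqn0 => /eqP ->.
case: (ltngtP n N.+1) hN => // [lt _|-> //].
by rewrite big_ord_recr /= IH // Hz // addn0.
Qed.

Definition Y : {poly nat} := 1 + 'X.

Lemma coefY j k : (Y ^+ j)`_k = 'C(j, k).
Proof.
have -> : Y = 1%:P + 1%:P * 'X by rewrite /Y polyC1 mul1r.
by rewrite coef_lin !exp1n !mul1n.
Qed.

Lemma step1 m d : (d <= m)%N ->
  Y ^+ d * (Y + 1) ^+ (m - d) = \sum_(l < m.+1) Y ^+ (m - l) *+ 'C(m - d, l).
Proof.
move=> dm.
rewrite (exprDn Y 1) mulr_sumr (sum_truncP (m - d).+1 m.+1 (fun l => Y ^+ (m - l) *+ 'C(m - d, l))); last first.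
- by move=> i hi; rewrite bin_small // mulr0n.
- by rewrite ltnS leq_subr.
apply: eq_bigr => i _.
rewrite expr1n mulr1 mulrnAr -exprD.
have := ltn_ord i; move=> hi.
by congr (Y ^+ _ *+ _); lia.
Qed.

Lemma step2 m k : (k <= m)%N ->
  (Y + 1) ^+ k * ((Y + 1) + Y) ^+ (m - k) =
  \sum_(d < m.+1) (Y ^+ d * (Y + 1) ^+ (m - d)) *+ 'C(m - k, d).
Proof.
move=> km.
rewrite (exprDn (Y + 1) Y) mulr_sumr (sum_truncP (m - k).+1 m.+1 (fun d => (Y ^+ d * (Y + 1) ^+ (m - d)) *+ 'C(m - k, d))); last first.
- by move=> i hi; rewrite bin_small // mulr0n.
- by rewrite ltnS leq_subr.
apply: eq_bigr => i _.
rewrite mulrnAr mulrA -exprD mulrC.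
have := ltn_ord i; move=> hi.
by congr (_ * (Y + 1) ^+ _ *+ _); lia.
Qed.

Definition Sm (m : nat) : nat :=
  \sum_(k < m.+1) \sum_(l < m.+1) \sum_(d < m.+1)
     ('C(m - d, l) * 'C(m - k, d) * 'C(m - l, k)).

Lemma sumRN n (F : 'I_n -> nat) :
  \big[@GRing.add nat/0%R]_(i < n) F i = (\sum_(i < n) F i)%N.
Proof. by []. Qed.

Lemma natmulE (x n : nat) : x *+ n = (x * n)%N.
Proof. by rewrite -mulr_natr natn. Qed.

Lemma termeq m k d : (k <= m)%N -> (d <= m)%N ->
  (Y ^+ d * (Y + 1) ^+ (m - d) *+ 'C(m - k, d))`_k =
  (\sum_(l < m.+1) 'C(m - d, l) * 'C(m - k, d) * 'C(m - l, k))%N.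
Proof.
move=> km dm.
rewrite coefMn step1 // coef_sum sumRN natmulE big_distrl /=.
apply: eq_bigr => l _.
by rewrite coefMn coefY natmulE [RHS]mulnC mulnA.
Qed.

Lemma S_poly m : Sm m = \sum_(k < m.+1) ((Y + 1) ^+ k * ((Y + 1) + Y) ^+ (m - k))`_k.
Proof.
rewrite /Sm sumRN; apply: eq_bigr => k _.
have km : (k <= m)%N by have := ltn_ord k; lia.
rewrite step2 // coef_sum sumRN exchange_big /=.
apply: eq_bigr => d _.
by rewrite termeq //; have := ltn_ord d; lia.
Qed.

Local Open Scope nat_scope.

Definition t (k r i : nat) : nat := 'C(k, i) * 'C(r, i) * 4 ^ i * 3 ^ (r - i).
Definition D (k r : nat) : nat := \sum_(i < k.+1) t k r i.

Lemma D_ext k r N : k < N -> D k r = \sum_(i < N) t k r i.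
Proof.
move=> kN; rewrite /D (sum_truncN k.+1 N (t k r)) //.
by move=> i hi; rewrite /t (bin_small hi) !mul0n.
Qed.

Lemma t0 k r : t k r 0 = 3 ^ r.
Proof. by rewrite /t !bin0 expn0 !mul1n subn0. Qed.

Lemma tstep k r i :
  t k.+1 r.+1 i.+1 + 3 * t k r i.+1 = t k r.+1 i.+1 + 4 * t k r i + 3 * t k.+1 r i.+1.
Proof.
rewrite /t !binS subSS.
case: (leqP r i) => ri.
  rewrite (bin_small (n:=r) (m:=i.+1)) ?ltnS //.
  have -> : r - i = 0 by lia.
  rewrite !expnS; nia.
have -> : r - i = (r - i.+1).+1 by lia.
rewrite !expnS.
nia.
Qed.

Lemma peel k r N : \sum_(i < N.+1) t k r i = 3 ^ r + \sum_(i < N) t k r i.+1.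
Proof. by rewrite big_ord_recl t0. Qed.

Lemma Drec k r : D k.+1 r.+1 = D k r.+1 + 3 * D k.+1 r + D k r.
Proof.
rewrite (D_ext k.+1 r.+1 k.+3); last lia.
rewrite (D_ext k r.+1 k.+3); last lia.
rewrite (D_ext k.+1 r k.+3); last lia.
have E1 : D k r = \sum_(i < k.+2) t k r i by rewrite (D_ext k r k.+2) //; lia.
have E2 : D k r = \sum_(i < k.+3) t k r i by rewrite (D_ext k r k.+3) //; lia.
rewrite peel in E2.
rewrite !peel.
have H : \sum_(i < k.+2) t k.+1 r.+1 i.+1 + 3 * \sum_(i < k.+2) t k r i.+1 =
         \sum_(i < k.+2) t k r.+1 i.+1 + 4 * \sum_(i < k.+2) t k r i
           + 3 * \sum_(i < k.+2) t k.+1 r i.+1.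
  rewrite !big_distrr -!big_split /=.
  by apply: eq_bigr => i _; rewrite tstep.
rewrite -E1 in H.
rewrite expnS.
lia.
Qed.

Lemma Dk0 k : D k 0 = 1.
Proof.
rewrite /D big_ord_recl t0 big1 // => i _.
by rewrite /t (bin_small (n:=0)) // muln0 !mul0n.
Qed.

Lemma D0r r : D 0 r = 3 ^ r.
Proof. by rewrite /D big_ord1 t0. Qed.

Definition Sd (m : nat) : nat := \sum_(k < m.+1) D k (m - k).

Lemma Srec m : Sd m.+2 = 4 * Sd m.+1 + Sd m.
Proof.
rewrite /Sd.
rewrite big_ord_recl big_ord_recr /= subnn Dk0 D0r.
have A : \sum_(i < m.+1) D (bump 0 i) (m.+2 - bump 0 i) =
  \sum_(i < m.+1) (D i (m.+1 - i) + 3 * D i.+1 (m - i) + D i (m - i)).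
  apply: eq_bigr => i _.
  have hi := ltn_ord i.
  have -> : m.+2 - bump 0 i = (m - i).+1 by rewrite /bump /=; lia.
  rewrite Drec.
  by have -> : m.+1 - i = (m - i).+1 by lia.
have A' : \sum_(i < m.+1) (D i (m.+1 - i) + 3 * D i.+1 (m - i) + D i (m - i)) =
  \sum_(i < m.+1) D i (m.+1 - i) + 3 * \sum_(i < m.+1) D i.+1 (m - i) + \sum_(i < m.+1) D i (m - i).
  by rewrite big_distrr -!big_split.
rewrite A A' subn0.
have B : \sum_(i < m.+2) D i (m.+1 - i) = \sum_(i < m.+1) D i (m.+1 - i) + 1.
  by rewrite big_ord_recr /= subnn Dk0.
have C : \sum_(i < m.+2) D i (m.+1 - i) = 3 ^ m.+1 + \sum_(i < m.+1) D i.+1 (m - i).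
  rewrite big_ord_recl D0r subn0; congr (_ + _); apply: eq_bigr => i _ /=.
  rewrite /bump /=.
rewrite [3 ^ m.+2]expnS.
rewrite B. set Z := \sum_(k < m.+1) D k (m - k). set X := \sum_(k < m.+1) D k (m.+1 - k). set W := \sum_(k < m.+1) D k.+1 (m - k). lia.
Qed.

Lemma fib6 n : fib (n + 6) = 4 * fib (n + 3) + fib n.
Proof.
rewrite !addnS !addn0 /=.
lia.
Qed.

Lemma coefD k r : (((Y + 1) ^+ k * ((Y + 1) + Y) ^+ r)`_k)%R = D k r.
Proof.
Local Open Scope ring_scope.
have E1 : Y + 1 = 2%:P + 1%:P * 'X.
  apply/polyP => i; rewrite /Y !coefE.
  by case: i => [|[|i]].
have E2 : (Y + 1) + Y = 3%:P + 2%:P * 'X.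
  apply/polyP => i; rewrite /Y !coefE.
  by case: i => [|[|i]].
rewrite E2 E1 coefM sumRN.
rewrite /D (reindex_inj rev_ord_inj) /=.
apply: eq_bigr => i _.
rewrite !coef_lin /t.
have hi : (i <= k)%N by have := ltn_ord i; lia.
rewrite subKn // bin_sub // exp1n muln1.
change (2%R : nat) with 2%N; change (3%R : nat) with 3%N.
have -> : (4 ^ i = 2 ^ i * 2 ^ i)%N by rewrite -expnMn.
set a := 'C(k, i); set b := 'C(r, i); set p := (2 ^ i)%N; set q := (3 ^ (r - i))%N.
nia.
Qed.

Local Open Scope nat_scope.

Lemma Sm_Sd m : Sm m = Sd m.
Proof.
rewrite S_poly /Sd sumRN; apply: eq_bigr => k _.
by rewrite coefD.
Qed.

Lemma S2 m : 2 * Sd m = fib (3 * m.+1) /\ 2 * Sd m.+1 = fib (3 * m.+2).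
Proof.
elim: m => [|m [IH1 IH2]].
  split.
    by rewrite /Sd big_ord1 D0r.
  by rewrite /Sd big_ord_recr big_ord1 /= D0r Dk0.
split; first by [].
rewrite Srec.
have -> : 3 * m.+3 = 3 * m.+1 + 6 by lia.
rewrite fib6.
have <- : 3 * m.+2 = 3 * m.+1 + 3 by lia.
lia.
Qed.

Lemma binzE m (d : 'I_m.+1) l : binz ((m.+1)%:Z - 1 - (d : nat)%:Z)%R l = 'C(m - d, l).
Proof.
have hd := ltn_ord d.
have -> : ((m.+1)%:Z - 1 - (d : nat)%:Z)%R = Posz (m - d) by lia.
by [].
Qed.

Local Open Scope ring_scope.

Theorem proposition7p8 (n : nat) (hn : (1 <= n)%N) :
  (\sum_(k < n) \sum_(l < n) \sum_(d < n)
     (binz (n%:Z - 1 - d%:Z) l * binz (n%:Z - 1 - k%:Z) d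
        * binz (n%:Z - 1 - l%:Z) k)%N)%:R
  = (fib (3 * n))%:R / 2 :> rat.
Proof.
case: n hn => [//|m] _.
under eq_bigr => k _ do under eq_bigr => l _ do under eq_bigr => d _ do rewrite !binzE.
rewrite -/(Sm m) Sm_Sd -(S2 m).1 natrM. by rewrite mulrAC divff ?mul1r.
Qed.
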